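(* There is an absolute constant $C$ such that the following holds. Let $0<\epsilon\le1$, let $X\subset\mathbb{R}^2$ be a finite set of points in general position, and let $A\subseteq X$ be an $\epsilon$-approximation for $X$ with respect to the ranges given by wedges (intersections of two closed halfplanes), with $|A|\ge\max(3,1/\epsilon)$. Then for every point $p\in\mathbb{R}^2$ such that $X\cup\{p\}$ is in general position, $|\mathrm{SD}_X(p)-\mathrm{SD}_A(p)|\le C\sqrt{\epsilon}$.
   Context: For a finite set $Y\subset\mathbb{R}^2$ with $|Y|\ge3$ and $p\in\mathbb{R}^2$, the simplicial depth $\mathrm{SD}_Y(p)$ is the fraction, among all $\binom{|Y|}{3}$ triangles formed by convex hulls of 3-element subsets of $Y$, of those triangles that contain $p$. For a finite set $X$ and a family $\mathcal{R}$ of subsets of the plane, $A\subseteq X$ is an $\epsilon$-approximation for $X$ with respect to $\mathcal{R}$ if $\left|\frac{|A\cap R|}{|A|}-\frac{|X\cap R|}{|X|}\right|\le\epsilon$ for every $R\in\mathcal{R}$. *)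

(* Defs.v *)
From mathcomp Require Import all_boot all_order all_algebra.
From mathcomp Require Import boolp reals.
Set Implicit Arguments. Unset Strict Implicit. Unset Printing Implicit Defensive.
Import Order.TTheory GRing.Theory Num.Theory.
Local Open Scope ring_scope.

Section Defs.
Variable R : realType.

Definition point := (R * R)%type.

Definition orient (x y z : point) : R :=
  (y.1 - x.1) * (z.2 - x.2) - (y.2 - x.2) * (z.1 - x.1).

Definition gen_pos (S : seq point) : Prop :=
  forall x y z, x \in S -> y \in S -> z \in S ->
    x != y -> y != z -> x != z -> orient x y z != 0.

Record halfplane := Halfplane { hp_a : R; hp_b : R; hp_c : R }.
Definition proper_hp (h : halfplane) : Prop := (hp_a h != 0) || (hp_b h != 0).
Definition in_hp (h : halfplane) (q : point) : bool :=
  hp_a h * q.1 + hp_b h * q.2 <= hp_c h.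

Definition in_wedge (h1 h2 : halfplane) (q : point) : bool :=
  in_hp h1 q && in_hp h2 q.

Definition freq (P : pred point) (Y : seq point) : R :=
  (count P Y)%:R / (size Y)%:R.

Definition eps_approx_wedges (eps : R) (A X : seq point) : Prop :=
  forall h1 h2 : halfplane, proper_hp h1 -> proper_hp h2 ->
    `| freq (in_wedge h1 h2) A - freq (in_wedge h1 h2) X | <= eps.

Definition in_triangle (x y z p : point) : Prop :=
  exists a b c : R, [/\ 0 <= a, 0 <= b, 0 <= c & a + b + c = 1] /\
    p.1 = a * x.1 + b * y.1 + c * z.1 /\ p.2 = a * x.2 + b * y.2 + c * z.2.

Definition SD (Y : seq point) (p : point) : R :=
  let n := size Y in
  (\sum_(i < n) \sum_(j < n) \sum_(k < n)
     (if ((i < j) && (j < k))%N && `[< in_triangle (nth (0,0) Y i)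
                                    (nth (0,0) Y j) (nth (0,0) Y k) p >]
      then 1 else 0)) / ('C(n, 3))%:R.

End Defs.

(* Main.v *)
Require Import Defs.
From mathcomp Require Import all_boot all_order all_algebra.
From mathcomp Require Import boolp reals ring lra zify.
Set Implicit Arguments. Unset Strict Implicit. Unset Printing Implicit Defensive.
Import Order.TTheory GRing.Theory Num.Theory.
Local Open Scope ring_scope.

Definition b2r {R : realType} (b : bool) : R := if b then 1 else 0.

Section Geo.
Variable R : realType.
Variable p : point R.

Definition hA (y z : point R) : halfplane R :=
  let D := orient p y z in let v1 := p.1 - z.1 in let v2 := p.2 - z.2 in
  Halfplane (- (D * v2)) (D * v1) (- (D * v2) * p.1 + D * v1 * p.2).
Definition hB (y z : point R) : halfplane R :=
  let D := orient p y z in let u1 := p.1 - y.1 in let u2 := p.2 - y.2 in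
  Halfplane (D * u2) (- (D * u1)) (D * u2 * p.1 - D * u1 * p.2).

Lemma prop_aux (D a b c d : R) : D != 0 -> D = a * d - b * c ->
  (D * d != 0) || (D * c != 0).
Proof.
move=> hD eD; apply: contraT => /norP [/negPn h1 /negPn h2].
move: h1 h2; rewrite !mulf_eq0 (negbTE hD) /= => /eqP h1 /eqP h2.
by move: hD; rewrite eD h1 h2 !mulr0 subrr eqxx.
Qed.

Lemma hA_proper y z : orient p y z != 0 -> proper_hp (hA y z).
Proof.
move=> hD; rewrite /proper_hp /hA /= oppr_eq0.
apply: (prop_aux (a := p.1 - y.1) (b := p.2 - y.2)) => //.
rewrite /orient; ring.
Qed.

Lemma hB_proper y z : orient p y z != 0 -> proper_hp (hB y z).
Proof.
move=> hD; rewrite /proper_hp /hB /= oppr_eq0 orbC.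
apply: (prop_aux (a := p.2 - z.2) (b := p.1 - z.1)) => //.
rewrite /orient; ring.
Qed.

Lemma tri_cone x y z : orient p y z != 0 ->
  in_triangle x y z p <-> in_wedge (hA y z) (hB y z) x.
Proof.
rewrite /in_wedge /in_hp /hA /hB /=.
set D := orient p y z => hD.
have eD : D = (p.1 - y.1) * (p.2 - z.2) - (p.2 - y.2) * (p.1 - z.1) by rewrite /D /orient; ring.
have D2 : 0 < D * D by rewrite lt0r mulf_neq0 //= -expr2 sqr_ge0.
split.
- move=> [a [b [c [[ha hb hc habc] [e1 e2]]]]].
  have ec : c = 1 - a - b by lra.
  rewrite ec in e1 e2.
  have k1 : a * (D * ((x.1 - p.1) * (p.2 - z.2) - (x.2 - p.2) * (p.1 - z.1))) = b * (D * D).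
    rewrite {2}eD e1 e2; ring.
  have k2 : a * (D * ((p.1 - y.1) * (x.2 - p.2) - (p.2 - y.2) * (x.1 - p.1))) = (1 - a - b) * (D * D).
    rewrite {2}eD e1 e2; ring.
  have ha0 : 0 < a.
    rewrite lt0r ha andbT; apply/eqP => a0.
    rewrite a0 mul0r in k1 k2.
    have b0 : b = 0 by nra.
    rewrite mul0r b0 in k2; nra.
  have h1 : 0 <= D * ((x.1 - p.1) * (p.2 - z.2) - (x.2 - p.2) * (p.1 - z.1)).
    have : 0 <= a * (D * ((x.1 - p.1) * (p.2 - z.2) - (x.2 - p.2) * (p.1 - z.1))).
      by rewrite k1 mulr_ge0 // ltW.
    by rewrite pmulr_rge0.
  have h2 : 0 <= D * ((p.1 - y.1) * (x.2 - p.2) - (p.2 - y.2) * (x.1 - p.1)).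
    have : 0 <= a * (D * ((p.1 - y.1) * (x.2 - p.2) - (p.2 - y.2) * (x.1 - p.1))).
      by rewrite k2 -ec mulr_ge0 // ltW.
    by rewrite pmulr_rge0.
  apply/andP; split; lra.
- move=> /andP [g1 g2].
  set F1 := D * ((x.1 - p.1) * (p.2 - z.2) - (x.2 - p.2) * (p.1 - z.1)).
  set F2 := D * ((p.1 - y.1) * (x.2 - p.2) - (p.2 - y.2) * (x.1 - p.1)).
  have h1 : 0 <= F1 by rewrite /F1; lra.
  have h2 : 0 <= F2 by rewrite /F2; lra.
  set S := D * D + F1 + F2.
  have S0 : 0 < S by rewrite /S; lra.
  have S0' : S != 0 by rewrite gt_eqF.
  exists (D * D / S), (F1 / S), (F2 / S); split.
    have S0w := ltW S0.
    split; [by rewrite divr_ge0 ?ltW | by rewrite divr_ge0 | by rewrite divr_ge0 |].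
    by rewrite /S -!mulrDl divff.
  have i1 : D * D * x.1 + F1 * y.1 + F2 * z.1 = S * p.1.
    by rewrite /S /F1 /F2 eD; ring.
  have i2 : D * D * x.2 + F1 * y.2 + F2 * z.2 = S * p.2.
    by rewrite /S /F1 /F2 eD; ring.
  split.
    transitivity ((S * p.1) / S); first by rewrite mulrC mulKf.
    by rewrite -i1; field.
  transitivity ((S * p.2) / S); first by rewrite mulrC mulKf.
  by rewrite -i2; field.
Qed.
End Geo.

Section Means.
Variable R : realType.
Notation pt := (point R).

Lemma b2r_ge0 b : (0 : R) <= b2r b. Proof. by case: b; rewrite /b2r. Qed.
Lemma b2r_le1 b : (b2r b : R) <= 1. Proof. by case: b; rewrite /b2r. Qed.

Definition mean (s : seq pt) (f : pt -> R) : R := (\sum_(x <- s) f x) / (size s)%:R.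

Lemma eq_mean s f g : {in s, f =1 g} -> mean s f = mean s g.
Proof. by move=> h; rewrite /mean (eq_big_seq _ h). Qed.

Lemma mean_comm s t (f : pt -> pt -> R) :
  mean s (fun x => mean t (f x)) = mean t (fun y => mean s (fun x => f x y)).
Proof.
rewrite /mean /= -!mulr_suml exchange_big /= -!mulrA; congr (_ * _).
by rewrite mulrC.
Qed.

Lemma sum_const_seq (s : seq pt) (c : R) : \sum_(x <- s) c = c * (size s)%:R.
Proof.
elim: s => [|a s IH]; first by rewrite big_nil mulr0.
by rewrite big_cons IH /= -addn1 natrD mulrDr mulr1 addrC.
Qed.

Lemma mean_const s c : size s != 0%N -> mean s (fun _ => c) = c.
Proof.
move=> hs; rewrite /mean sum_const_seq mulfK //.
by rewrite pnatr_eq0.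
Qed.

Lemma sum_count (s : seq pt) (P : pred pt) :
  \sum_(x <- s) b2r (P x) = ((count P s)%:R : R).
Proof.
elim: s => [|a s IH]; first by rewrite big_nil.
rewrite big_cons IH /= natrD; congr (_ + _).
by rewrite /b2r; case: (P a).
Qed.

Lemma mean_count s (P : pred pt) : mean s (fun x => b2r (P x)) = freq P s.
Proof. by rewrite /mean sum_count. Qed.

Lemma ler_sum_seq (s : seq pt) (f g : pt -> R) :
  {in s, forall x, f x <= g x} -> \sum_(x <- s) f x <= \sum_(x <- s) g x.
Proof.
move=> h; rewrite big_seq [X in _ <= X]big_seq; apply: ler_sum => x; exact: h.
Qed.

Lemma mean_le s f g : {in s, forall x, f x <= g x} -> mean s f <= mean s g.
Proof.
move=> h; rewrite /mean ler_wpM2r //; first by rewrite invr_ge0.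
exact: ler_sum_seq.
Qed.

Lemma mean_add s f g : mean s (fun x => f x + g x) = mean s f + mean s g.
Proof. by rewrite /mean big_split /= mulrDl. Qed.

Lemma mean_dist s f g h : {in s, forall x, `|f x - g x| <= h x} ->
  `|mean s f - mean s g| <= mean s h.
Proof.
move=> H; rewrite /mean -mulrBl -sumrB normrM.
rewrite [ `|_^-1| ]ger0_norm ?invr_ge0 //.
rewrite ler_wpM2r ?invr_ge0 //.
apply: le_trans (ler_norm_sum _ _ _) _.
exact: ler_sum_seq.
Qed.

Definition good_on (X : seq pt) (P : pred pt) : Prop :=
  (exists h1 h2, [/\ proper_hp h1, proper_hp h2 & {in X, P =1 in_wedge h1 h2}])
  \/ {in X, forall x, P x}.

Lemma good_freq eps (A X : seq pt) (P : pred pt) :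
  0 < eps -> eps_approx_wedges eps A X -> {subset A <= X} ->
  size A != 0%N -> size X != 0%N -> good_on X P ->
  `|freq P A - freq P X| <= eps.
Proof.
move=> e0 hap sub nA nX [[h1 [h2 [p1 p2 hw]]] | hall].
  rewrite /freq (@eq_in_count _ P (in_wedge h1 h2) X hw) (@eq_in_count _ P (in_wedge h1 h2) A); last first.
    by move=> x /sub; apply: hw.
  exact: hap.
rewrite /freq (@eq_in_count _ P predT X) // (@eq_in_count _ P predT A); last first.
  by move=> x /sub /hall ->.
by rewrite !count_predT !divff ?pnatr_eq0 // subrr normr0 ltW.
Qed.

Definition E (S1 S2 S3 : seq pt) (F : pt -> pt -> pt -> bool) : R :=
  mean S1 (fun x => mean S2 (fun y => mean S3 (fun z => b2r (F x y z)))).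

Lemma E_rot S1 S2 S3 F : E S1 S2 S3 F = E S2 S3 S1 (fun y z x => F x y z).
Proof.
rewrite /E mean_comm; apply: eq_mean => y _.
by rewrite mean_comm.
Qed.

Lemma E_step eps (A X S2 S3 : seq pt) F :
  0 < eps -> eps_approx_wedges eps A X -> {subset A <= X} ->
  size A != 0%N -> size X != 0%N -> size S2 != 0%N -> size S3 != 0%N ->
  (forall y z, good_on X (fun x => F x y z)) ->
  `|E A S2 S3 F - E X S2 S3 F| <= eps.
Proof.
move=> e0 hap sub nA nX n2 n3 hg.
rewrite (E_rot A) (E_rot X).
rewrite /E.
apply: le_trans (mean_dist (h := fun _ => eps) _) _; last by rewrite mean_const.
move=> y _.
apply: le_trans (mean_dist (h := fun _ => eps) _) _; last by rewrite mean_const.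
move=> z _ /=.
rewrite !mean_count.
exact: good_freq.
Qed.

Lemma mean_eq1 (s : seq pt) y : uniq s -> size s != 0%N ->
  mean s (fun z => b2r (y == z)) <= 1 / (size s)%:R.
Proof.
move=> us ns; rewrite (mean_count s (fun z => y == z)) /freq.
rewrite ler_wpM2r ?invr_ge0 // -[X in _ <= X]/(1%:R) ler_nat.
rewrite (@eq_count _ _ (pred1 y)); last by move=> z; rewrite /= eq_sym.
by rewrite count_uniq_mem // leq_b1.
Qed.

Lemma E_distinct (S1 S2 S3 : seq pt) F G :
  uniq S2 -> uniq S3 -> size S1 != 0%N -> size S2 != 0%N -> size S3 != 0%N ->
  (forall x y z, x \in S1 -> y \in S2 -> z \in S3 -> x != y -> y != z -> x != z ->
     F x y z = G x y z) ->
  `|E S1 S2 S3 F - E S1 S2 S3 G| <= 1 / (size S2)%:R + 2 / (size S3)%:R.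
Proof.
move=> u2 u3 n1 n2 n3 hFG.
set c2 := (1 : R) / (size S2)%:R; set c3 := (1 : R) / (size S3)%:R.
have -> : 2 / (size S3)%:R = c3 + c3 by rewrite /c3 -mulrDl.
rewrite /E.
apply: le_trans (mean_dist (h := fun x => mean S2 (fun y => mean S3 (fun z =>
   b2r (x == y) + b2r (y == z) + b2r (x == z)))) _) _.
  move=> x hx; apply: mean_dist => y hy; apply: mean_dist => z hz /=.
  have hd : `|(b2r (F x y z) : R) - b2r (G x y z)| <= 1.
    by case: (F x y z); case: (G x y z); rewrite /b2r ?subrr ?normr0 ?subr0 ?sub0r ?normrN ?normr1.
  have g1 := b2r_ge0 (x == y); have g2 := b2r_ge0 (y == z); have g3 := b2r_ge0 (x == z).
  have e0 : (b2r false : R) = 0 by [].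
  have [exy|nxy] := eqVneq x y.
    have e : (b2r true : R) = 1 by [].
    lra.
  have [eyz|nyz] := eqVneq y z.
    have e : (b2r true : R) = 1 by [].
    lra.
  have [exz|nxz] := eqVneq x z.
    have e : (b2r true : R) = 1 by [].
    lra.
  rewrite hFG // subrr normr0.
  by rewrite !addr_ge0 ?b2r_ge0.
rewrite -[X in _ <= X](mean_const (s := S1) _ n1).
apply: mean_le => x _.
apply: (@le_trans _ _ (mean S2 (fun y => b2r (x == y) + (c3 + c3)))).
  apply: mean_le => y _.
  rewrite !mean_add mean_const // -addrA lerD2l.
  by apply: lerD; apply: mean_eq1.
by rewrite mean_add mean_const // lerD2r mean_eq1.
Qed.
End Means.

Section Comb.
Variable R : realType.

Lemma final_ineq (N Q N0 : R) : 3 <= N ->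
  0 <= Q -> Q <= N * (N - 1) * (N - 2) ->
  0 <= N0 -> N0 <= N * N * N - N * (N - 1) * (N - 2) ->
  `| Q / (N * (N - 1) * (N - 2)) - (Q + N0) / N / N / N | <= 3 / N.
Proof.
move=> N3 Q0 Q1 N00 N01.
set m := N * (N - 1) * (N - 2).
have m0 : 0 < m by rewrite /m !mulr_gt0 //; lra.
have Np : 0 < N by lra.
have -> : Q / m - (Q + N0) / N / N / N = (Q * (N * N * N - m) - N0 * m) / (m * (N * N * N)).
  by field; rewrite !gt_eqF.
have d0 : 0 < m * (N * N * N) by apply: mulr_gt0 => //; apply: mulr_gt0 => //; apply: mulr_gt0.
rewrite normrM normfV (gtr0_norm d0) ler_pdivrMr //.
have -> : 3 / N * (m * (N * N * N)) = 3 * m * N * N by field; rewrite gt_eqF ?m0 ?Np.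
have em : N * N * N - m = 3 * N * N - 2 * N by rewrite /m; ring.
rewrite em in N01 *.
rewrite ler_norml; apply/andP; split; nra.
Qed.

Lemma six (i j k : nat) : (b2r [&& i != j, j != k & i != k] : R) =
  b2r ((i < j) && (j < k))%N + b2r ((i < k) && (k < j))%N + b2r ((j < i) && (i < k))%N +
  b2r ((j < k) && (k < i))%N + b2r ((k < i) && (i < j))%N + b2r ((k < j) && (j < i))%N.
Proof.
case: (ltngtP i j) => h1; case: (ltngtP j k) => h2; case: (ltngtP i k) => h3;
  rewrite /b2r /=; try lia; rewrite ?addr0 ?add0r //.
Qed.

Lemma incl_excl (i j k : nat) : (b2r [&& i != j, j != k & i != k] : R) =
  1 - b2r (i == j) - b2r (j == k) - b2r (i == k) + 2 * b2r ((i == j) && (j == k)).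
Proof.
case: (ltngtP i j) => h1; case: (ltngtP j k) => h2; case: (ltngtP i k) => h3;
  rewrite /b2r /=; try lia; ring.
Qed.

Section S3.
Variable n : nat.
Definition S3 (G : 'I_n -> 'I_n -> 'I_n -> R) : R :=
  \sum_(i < n) \sum_(j < n) \sum_(k < n) G i j k.

Lemma S3_ext G1 G2 : (forall i j k, G1 i j k = G2 i j k) -> S3 G1 = S3 G2.
Proof.
move=> h; apply: eq_bigr => i _; apply: eq_bigr => j _; apply: eq_bigr => k _; exact: h.
Qed.

Lemma S3_add G1 G2 : S3 (fun i j k => G1 i j k + G2 i j k) = S3 G1 + S3 G2.
Proof.
rewrite /S3 -big_split; apply: eq_bigr => i _.
rewrite -big_split; apply: eq_bigr => j _.
by rewrite -big_split.
Qed.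

Lemma S3_scale (c : R) G : S3 (fun i j k => c * G i j k) = c * S3 G.
Proof.
rewrite /S3 mulr_sumr; apply: eq_bigr => i _.
rewrite mulr_sumr; apply: eq_bigr => j _.
by rewrite mulr_sumr.
Qed.

Lemma S3_le G1 G2 : (forall i j k, G1 i j k <= G2 i j k) -> S3 G1 <= S3 G2.
Proof.
move=> h; apply: ler_sum => i _; apply: ler_sum => j _; apply: ler_sum => k _; exact: h.
Qed.

Lemma sw12 G : S3 G = S3 (fun i j k => G j i k).
Proof. by rewrite /S3 exchange_big. Qed.

Lemma sw23 G : S3 G = S3 (fun i j k => G i k j).
Proof. by rewrite /S3; apply: eq_bigr => i _; rewrite exchange_big. Qed.

Lemma sum_const_ord (c : R) : \sum_(i < n) c = c * n%:R.
Proof. by rewrite sumr_const card_ord mulr_natr. Qed.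

Lemma S3_const (c : R) : S3 (fun _ _ _ => c) = c * n%:R * n%:R * n%:R.
Proof.
rewrite /S3 (eq_bigr (fun _ => c * n%:R * n%:R)); first by rewrite sum_const_ord.
move=> i _; rewrite (eq_bigr (fun _ => c * n%:R)); first by rewrite sum_const_ord.
by move=> j _; rewrite sum_const_ord.
Qed.

Lemma sum_eq1 (i : 'I_n) : \sum_(j < n) b2r ((i : nat) == j) = (1 : R).
Proof.
rewrite (bigD1 i) //= /b2r eqxx big1 ?addr0 // => j hj.
by case: eqP => // /val_inj ij; move: hj; rewrite ij eqxx.
Qed.

Lemma sum_eq1' (i : 'I_n) : \sum_(j < n) b2r ((j : nat) == i) = (1 : R).
Proof. by rewrite -(sum_eq1 i); apply: eq_bigr => j _; rewrite eq_sym. Qed.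

Lemma S3_eq12 : S3 (fun (i j k : 'I_n) => b2r ((i : nat) == j)) = n%:R * n%:R.
Proof.
rewrite /S3 (eq_bigr (fun _ => n%:R)) ?sum_const_ord // => i _.
rewrite (eq_bigr (fun j : 'I_n => b2r ((i : nat) == j) * n%:R)); last first.
  by move=> j _; rewrite sum_const_ord.
by rewrite -mulr_suml sum_eq1 mul1r.
Qed.

Lemma S3_eq23 : S3 (fun (i j k : 'I_n) => b2r ((j : nat) == k)) = n%:R * n%:R.
Proof.
rewrite /S3 (eq_bigr (fun _ => n%:R)) ?sum_const_ord // => i _.
by rewrite (eq_bigr (fun _ => 1)) ?sum_const_ord ?mul1r // => j _; rewrite sum_eq1.
Qed.

Lemma S3_eq13 : S3 (fun (i j k : 'I_n) => b2r ((i : nat) == k)) = n%:R * n%:R.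
Proof.
rewrite /S3 (eq_bigr (fun _ => n%:R)) ?sum_const_ord // => i _.
by rewrite (eq_bigr (fun _ => 1)) ?sum_const_ord ?mul1r // => j _; rewrite sum_eq1.
Qed.

Lemma b2rA a b : (b2r (a && b) : R) = b2r a * b2r b.
Proof. by case: a; case: b; rewrite /b2r ?mulr1 ?mulr0 ?mul0r. Qed.

Lemma S3_eq123 : S3 (fun (i j k : 'I_n) => b2r (((i : nat) == j) && ((j : nat) == k))) = n%:R.
Proof.
rewrite /S3 (eq_bigr (fun _ => 1)) ?sum_const_ord ?mul1r // => i _.
rewrite -(sum_eq1 i); apply: eq_bigr => j _.
rewrite (eq_bigr (fun k : 'I_n => b2r ((i : nat) == j) * b2r ((j : nat) == k))); last first.
  by move=> k _; rewrite b2rA.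
by rewrite /= -mulr_sumr sum_eq1 mulr1.
Qed.

Lemma S3_dist : S3 (fun (i j k : 'I_n) => b2r [&& (i : nat) != j, (j : nat) != k & (i : nat) != k])
  = n%:R * (n%:R - 1) * (n%:R - 2).
Proof.
have H : S3 (fun (i j k : 'I_n) => b2r [&& (i : nat) != j, (j : nat) != k & (i : nat) != k]
   + b2r ((i : nat) == j) + b2r ((j : nat) == k) + b2r ((i : nat) == k)) =
   S3 (fun (i j k : 'I_n) => 1 + 2 * b2r (((i : nat) == j) && ((j : nat) == k))).
  by apply: S3_ext => i j k; rewrite incl_excl; ring.
rewrite !S3_add S3_scale S3_const S3_eq12 S3_eq23 S3_eq13 S3_eq123 in H.
move: H; set N : R := n%:R; set D := S3 _ => H.
have -> : D = 1 * N * N * N + 2 * N - (N * N + N * N + N * N).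
  by rewrite -H; ring.
ring.
Qed.
End S3.
End Comb.

Section Main.
Variable R : realType.
Variable p : point R.
Notation pt := (point R).

Definition tri (x y z : pt) : bool := `[< in_triangle x y z p >].

Lemma in_tri_12 x y z : in_triangle x y z p -> in_triangle y x z p.
Proof.
move=> [a [b [c [[ha hb hc habc] [e1 e2]]]]].
exists b, a, c; split; first by split => //; lra.
by split; [rewrite e1 | rewrite e2]; ring.
Qed.

Lemma in_tri_23 x y z : in_triangle x y z p -> in_triangle x z y p.
Proof.
move=> [a [b [c [[ha hb hc habc] [e1 e2]]]]].
exists a, c, b; split; first by split => //; lra.
by split; [rewrite e1 | rewrite e2]; ring.
Qed.

Lemma tri12 x y z : tri x y z = tri y x z.
Proof. by apply: asbool_equiv_eq; split; apply: in_tri_12. Qed.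

Lemma tri23 x y z : tri x y z = tri x z y.
Proof. by apply: asbool_equiv_eq; split; apply: in_tri_23. Qed.

Lemma trirot x y z : tri x y z = tri y z x.
Proof. by rewrite tri12 tri23. Qed.

Lemma in_tri_y x z : in_triangle x p z p.
Proof.
exists 0, 1, 0; split; first by split => //; lra.
by split; ring.
Qed.

Lemma in_tri_z x y : in_triangle x y p p.
Proof.
exists 0, 0, 1; split; first by split => //; lra.
by split; ring.
Qed.

Definition K1 (x y z : pt) : bool :=
  if orient p y z != 0 then in_wedge (hA p y z) (hB p y z) x else true.

Lemma K1_tri (X : seq pt) x y z : gen_pos (p :: X) -> y \in X -> z \in X -> y != z ->
  K1 x y z = tri x y z.
Proof.
move=> gp hy hz yz; rewrite /K1; case: ifP => h.
  by rewrite /tri (asbool_equiv_eqP idP (@tri_cone R p x y z h)).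
apply/esym/asboolP.
have [ey|ny] := eqVneq y p; first by rewrite ey; apply: in_tri_y.
have [ez|nz] := eqVneq z p; first by rewrite ez; apply: in_tri_z.
have hy' : y \in p :: X by rewrite in_cons hy orbT.
have hz' : z \in p :: X by rewrite in_cons hz orbT.
have := gp p y z (mem_head _ _) hy' hz'.
by rewrite eq_sym ny yz eq_sym nz h => /(_ isT isT isT).
Qed.

Lemma good_K1 (X : seq pt) y z : good_on X (fun x => K1 x y z).
Proof.
case h: (orient p y z != 0).
  left; exists (hA p y z), (hB p y z); split.
  - exact: hA_proper.
  - exact: hB_proper.
  - by move=> x _; rewrite /K1 h.
by right => x _; rewrite /K1 h.
Qed.

End Main.

Section SDE.
Variable R : realType.
Variable p : point R.
Notation pt := (point R).

Lemma mean_nth (s : seq pt) (f : pt -> R) :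
  mean s f = (\sum_(i < size s) f (nth (0, 0) s i)) / (size s)%:R.
Proof. by rewrite /mean (big_nth (0, 0)) big_mkord. Qed.

Lemma E_S3 (Y : seq pt) K : E Y Y Y K =
  S3 (fun (i j k : 'I_(size Y)) => b2r (K (nth (0,0) Y i) (nth (0,0) Y j) (nth (0,0) Y k)))
   / (size Y)%:R / (size Y)%:R / (size Y)%:R.
Proof.
rewrite /E /S3 mean_nth.
under eq_bigr => i _ do rewrite mean_nth.
under eq_bigr => i _ do under eq_bigr => j _ do rewrite mean_nth.
under eq_bigr => i _ do rewrite -mulr_suml.
by rewrite -!mulr_suml.
Qed.


Lemma SD_S3 (Y : seq pt) : SD Y p =
  S3 (fun (i j k : 'I_(size Y)) => b2r ((i < j) && (j < k))%N *
       b2r (tri p (nth (0,0) Y i) (nth (0,0) Y j) (nth (0,0) Y k))) / ('C(size Y, 3))%:R.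
Proof.
rewrite /SD /S3; congr (_ / _).
apply: eq_bigr => i _; apply: eq_bigr => j _; apply: eq_bigr => k _.
by rewrite -b2rA.
Qed.

Lemma binom3 (n : nat) : (3 <= n)%N ->
  ('C(n, 3))%:R * 6 = (n%:R * (n%:R - 1) * (n%:R - 2) : R).
Proof.
case: n => [|[|[|k]]] // _.
have h : ('C(k.+3, 3) * 6 = k.+3 * k.+2 * k.+1)%N.
  by rewrite -[6%N]/(3`!) bin_ffact !ffactnS ffactn0 /= muln1 mulnA.
rewrite -natrM h !natrM.
have e1 : (k.+2)%:R = (k.+3)%:R - 1 :> R by rewrite -[k.+3]addn1 natrD addrK.
have e2 : (k.+1)%:R = (k.+3)%:R - 2 :> R by rewrite (_ : k.+3 = k.+1 + 2)%N ?natrD ?addrK // addnC.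
by rewrite e1 e2.
Qed.

Lemma SD_E (Y : seq pt) K : uniq Y -> (3 <= size Y)%N ->
  (forall x y z, x \in Y -> y \in Y -> z \in Y -> x != y -> y != z -> x != z ->
     K x y z = tri p x y z) ->
  `|SD Y p - E Y Y Y K| <= 3 / (size Y)%:R.
Proof.
move=> uY n3 hK.
rewrite SD_S3 E_S3.
have hC := binom3 n3.
set n := size Y in n3 hC *.
pose Yi (i : 'I_n) := nth (0,0) Y i.
have memY (i : 'I_n) : Yi i \in Y by apply: mem_nth; exact: ltn_ord.
have neqY (i j : 'I_n) : (i : nat) != j -> Yi i != Yi j.
  by move=> h; rewrite /Yi nth_uniq.
pose f (i j k : 'I_n) : R := b2r (tri p (Yi i) (Yi j) (Yi k)).
pose d (i j k : 'I_n) : R := b2r [&& (i:nat) != j, (j:nat) != k & (i:nat) != k].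
pose g (i j k : 'I_n) : R := b2r ((i < j) && (j < k))%N * f i j k.
pose kk (i j k : 'I_n) : R := b2r (K (Yi i) (Yi j) (Yi k)).
have hsplit : S3 kk = S3 (fun i j k => d i j k * f i j k) + S3 (fun i j k => (1 - d i j k) * kk i j k).
  rewrite -S3_add; apply: S3_ext => i j k.
  rewrite /d /kk /f; case hd: [&& _, _ & _].
    move/and3P: hd => [h1 h2 h3].
    rewrite hK ?memY ?neqY //; rewrite /b2r; case: (tri _ _ _ _); ring.
  by rewrite /b2r; ring.
have hsym : S3 (fun i j k => d i j k * f i j k) = 6 * S3 g.
  have H : forall i j k, d i j k * f i j k =
      g i j k + g i k j + g j i k + g j k i + g k i j + g k j i.
    move=> i j k; rewrite /d six /g.
    have f1 : f i k j = f i j k by rewrite /f tri23.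
    have f2 : f j i k = f i j k by rewrite /f tri12.
    have f3 : f j k i = f i j k by rewrite /f (trirot p (Yi i)).
    have f4 : f k i j = f i j k by rewrite /f trirot.
    have f5 : f k j i = f i j k by rewrite /f tri12 (trirot p (Yi i)).
    rewrite f1 f2 f3 f4 f5; ring.
  rewrite (S3_ext H) !S3_add.
  have s1 : S3 (fun i j k => g i k j) = S3 g by rewrite -sw23.
  have s2 : S3 (fun i j k => g j i k) = S3 g by rewrite -sw12.
  have s3 : S3 (fun i j k => g j k i) = S3 g by rewrite (sw12 (fun i j k => g j k i)) /= -sw23.
  have s4 : S3 (fun i j k => g k i j) = S3 g by rewrite (sw23 (fun i j k => g k i j)) /= -sw12.
  have s5 : S3 (fun i j k => g k j i) = S3 g by rewrite (sw12 (fun i j k => g k j i)) /= s4.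
  rewrite s1 s2 s3 s4 s5; ring.
have hd : S3 d = n%:R * (n%:R - 1) * (n%:R - 2) by exact: S3_dist.
have z0 : S3 (fun _ _ _ : 'I_n => (0 : R)) = 0 by rewrite S3_const !mul0r.
have Q0 : 0 <= S3 (fun i j k => d i j k * f i j k).
  rewrite -z0; apply: S3_le => i j k; apply: mulr_ge0; exact: b2r_ge0.
have Q1 : S3 (fun i j k => d i j k * f i j k) <= S3 d.
  apply: S3_le => i j k; rewrite -[X in _ <= X]mulr1; apply: ler_wpM2l; [exact: b2r_ge0 | exact: b2r_le1].
have N00 : 0 <= S3 (fun i j k => (1 - d i j k) * kk i j k).
  rewrite -z0; apply: S3_le => i j k; apply: mulr_ge0; last exact: b2r_ge0.
  by rewrite subr_ge0 b2r_le1.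
have N01 : S3 (fun i j k => (1 - d i j k) * kk i j k) <= S3 (fun i j k => 1 + (-1) * d i j k).
  apply: S3_le => i j k; rewrite mulN1r -[X in _ <= X]mulr1; apply: ler_wpM2l; last exact: b2r_le1.
  by rewrite subr_ge0 b2r_le1.
rewrite S3_add S3_scale S3_const hd mul1r in N01.
have -> : S3 g = S3 (fun i j k => d i j k * f i j k) / 6 by rewrite hsym; field.
rewrite -/(S3 kk) hsplit.
have -> : ('C(n, 3))%:R = (n%:R * (n%:R - 1) * (n%:R - 2) : R) / 6 by rewrite -hC; field.
have nR : 3 <= (n%:R : R) by rewrite ler_nat.
have m0 : (n%:R * (n%:R - 1) * (n%:R - 2) : R) != 0.
  by rewrite gt_eqF // !mulr_gt0 //; lra.
rewrite (_ : forall a : R, a / 6 / (n%:R * (n%:R - 1) * (n%:R - 2) / 6) =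
   a / (n%:R * (n%:R - 1) * (n%:R - 2))); last first.
  have hn0 : (n%:R : R) != 0 by rewrite gt_eqF //; lra.
  have hn1 : (n%:R - 1 : R) != 0 by rewrite gt_eqF //; lra.
  have hn2 : (n%:R - 2 : R) != 0 by rewrite gt_eqF //; lra.
  by move=> a; field; rewrite ?hn0 ?hn1 ?hn2.
apply: final_ineq => //.
by rewrite hd in Q1.
by rewrite hd in Q1; lra.
Qed.

End SDE.

Unset Implicit Arguments.

Theorem mainTheorem5 (R : realType) :
  exists C : R, forall (eps : R) (X A : seq (point R)),
    0 < eps -> eps <= 1 ->
    uniq X -> gen_pos X ->
    uniq A -> {subset A <= X} ->
    eps_approx_wedges eps A X ->
    (3 <= size A)%N -> eps^-1 <= (size A)%:R ->
    forall p : point R, gen_pos (p :: X) ->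
      `| SD X p - SD A p | <= C * Num.sqrt eps.
Proof.
exists 15 => eps X A e0 e1 uX gX uA sub hap nA3 heps p gp.
have nAX : (size A <= size X)%N by apply: uniq_leq_size.
have nX3 : (3 <= size X)%N by apply: leq_trans nAX.
have nA0 : size A != 0%N by rewrite -lt0n (leq_trans _ nA3).
have nX0 : size X != 0%N by rewrite -lt0n (leq_trans _ nX3).
have nApos : 0 < (size A)%:R :> R by rewrite ltr0n lt0n.
have nXpos : 0 < (size X)%:R :> R by rewrite ltr0n lt0n.
have iA : (size A)%:R^-1 <= eps.
  by rewrite -[eps]invrK lef_pV2 ?posrE ?invr_gt0.
have iX : (size X)%:R^-1 <= (size A)%:R^-1 :> R.
  by rewrite lef_pV2 ?posrE // ler_nat.
set K2 := fun x y z => K1 p y z x.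
have agr (x y z : point R) : x \in X -> y \in X -> z \in X -> y != z ->
    K1 p x y z = tri p x y z.
  by move=> _ hy hz yz; apply: K1_tri gp hy hz yz.
have e1' := SD_E (K := K1 p) uA nA3 (fun x y z hx hy hz _ yz _ => agr x y z (sub _ hx) (sub _ hy) (sub _ hz) yz).
have e9 := SD_E (K := K1 p) uX nX3 (fun x y z hx hy hz _ yz _ => agr x y z hx hy hz yz).
have e2 := E_step (F := K1 p) e0 hap sub nA0 nX0 nA0 nA0 (fun y z => good_K1 p X y z).
have e5 := E_step (F := K1 p) e0 hap sub nA0 nX0 nA0 nX0 (fun y z => good_K1 p X y z).
have e8 := E_step (F := K1 p) e0 hap sub nA0 nX0 nX0 nX0 (fun y z => good_K1 p X y z).
have hdist (S2 S3 : seq (point R)) : {subset S2 <= X} -> {subset S3 <= X} ->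
  forall x y z, x \in X -> y \in S2 -> z \in S3 -> x != y -> y != z -> x != z ->
    K1 p x y z = K2 x y z.
  move=> s2 s3 x y z hx hy hz xy yz xz.
  have zx : z != x by rewrite eq_sym.
  rewrite /K2 /= (agr x y z hx (s2 _ hy) (s3 _ hz) yz) (agr y z x (s2 _ hy) (s3 _ hz) hx zx).
  by rewrite trirot.
have e3 := E_distinct (F := K1 p) (G := K2) uA uA nX0 nA0 nA0 (hdist A A sub sub).
have e6 := E_distinct (F := K1 p) (G := K2) uA uX nX0 nA0 nX0 (hdist A X sub (fun x h => h)).
have r4 : E X A A K2 = E A A X (K1 p) by rewrite E_rot.
have r7 : E X A X K2 = E A X X (K1 p) by rewrite E_rot.
rewrite r4 in e3; rewrite r7 in e6.
have sq : eps <= Num.sqrt eps.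
  have s0 := sqrtr_ge0 eps.
  have s1 : Num.sqrt eps <= 1 by rewrite -sqrtr1 ler_sqrt.
  rewrite -{1}(sqr_sqrtr (ltW e0)) expr2.
  by rewrite -[X in _ <= X]mul1r ler_wpM2r.
move: e1' e9 e2 e5 e8 e3 e6; rewrite !ler_norml.
move=> /andP [a1 b1] /andP [a9 b9] /andP [a2 b2] /andP [a5 b5] /andP [a8 b8] /andP [a3 b3] /andP [a6 b6].
apply/andP; split; lra.
Qed.
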